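(* Let $A\in\mathbb{R}^{n\times n}$, $B\in\mathbb{R}^{n\times 1}$ (single-input agents), and let $\mathcal{L}$ be the Laplacian of a weighted directed graph on $N$ nodes with eigenvalues $\lambda_1(\mathcal{L})=0,\lambda_2(\mathcal{L}),\dots,\lambda_N(\mathcal{L})$. Suppose (A1') $(A,B)$ is stabilizable and $$\prod_{j}|\lambda_{j}^{u}(A)|<\frac{1}{\inf_{\omega\in\mathbb{R}}\max_{j\in\{2,\dots,N\}}|1-\omega\lambda_{j}(\mathcal{L})|}.$$ Then (A1) holds: there exists $K\in\mathbb{R}^{1\times n}$ such that all eigenvalues of $A-\lambda_{i}(\mathcal{L})BK$, $i=2,\dots,N$, lie in the open unit disk of the complex plane.
   Context: The Laplacian of a weighted directed graph with adjacency matrix $\mathscr{A}=[a_{ij}]$ ($a_{ii}=0$, $a_{ij}\ge0$) is $\mathcal{L}=\mathrm{diag}(\sum_j a_{1j},\dots,\sum_j a_{Nj})-\mathscr{A}$; its eigenvalues (with multiplicity), ordered by ascending real parts, are $\lambda_1(\mathcal{L})=0,\lambda_2(\mathcal{L}),\dots,\lambda_N(\mathcal{L})$. The numbers $\lambda_j^u(A)$ are the unstable eigenvalues of $A$ (those on or outside the unit circle); if $\rho(A)<1$ (spectral radius), the product $\prod_j|\lambda_j^u(A)|$ is defined to be $0$. *)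

(* Defs.v *)
From HB Require Import structures.
From mathcomp Require Import all_boot all_order all_algebra.
From mathcomp Require Import complex.
From mathcomp Require Import classical_sets reals.
Set Implicit Arguments. Unset Strict Implicit. Unset Printing Implicit Defensive.
Import Order.TTheory GRing.Theory Num.Theory.
Local Open Scope ring_scope.

Definition laplacian (R : pzRingType) (N : nat) (Ad : 'M[R]_N) : 'M[R]_N :=
  \matrix_(i, j) ((i == j)%:R * (\sum_(k < N) Ad i k)) - Ad.

Definition cmx (R : rcfType) (m n : nat) (M : 'M[R]_(m, n)) : 'M[R[i]]_(m, n) :=
  map_mx (fun x : R => x%:C%C) M.

(* eigenvalues of a complex square matrix, listed with algebraic multiplicity:
   the roots (with multiplicity) of its characteristic polynomial. *)
Definition eigs (R : rcfType) (n : nat) (M : 'M[R[i]]_n) : seq R[i] :=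
  sval (closed_field_poly_normal (char_poly M)).

Definition cabs (R : rcfType) (z : R[i]) : R := Normc.normc z.

Definition schur_stable (R : rcfType) (n : nat) (M : 'M[R[i]]_n) : Prop :=
  forall z : R[i], z \in eigs M -> cabs z < 1.

Definition stabilizable (R : rcfType) (n m : nat)
    (A : 'M[R]_n) (B : 'M[R]_(n, m)) : Prop :=
  exists K : 'M[R]_(m, n), schur_stable (cmx (A - B *m K)).

(* prod_j |lambda_j^u(A)| over the unstable eigenvalues (|lambda| >= 1), with
   multiplicity; defined to be 0 when rho(A) < 1 (no unstable eigenvalue). *)
Definition unstable_prod (R : rcfType) (n : nat) (A : 'M[R]_n) : R :=
  let e := eigs (cmx A) in
  if has (fun z => 1 <= cabs z) e
  then \prod_(z <- e | 1 <= cabs z) cabs z else 0.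

(* lambda_2(L), ..., lambda_N(L): the eigenvalues of L with multiplicity,
   with one copy of lambda_1(L) = 0 removed. *)
Definition lap_eigs_nz (R : rcfType) (N : nat) (L : 'M[R]_N) : seq R[i] :=
  rem 0 (eigs (cmx L)).

(* gamma = inf_{omega in R} max_{j in 2..N} |1 - omega lambda_j(L)|
   (the max over an empty index set is taken to be 0) *)
Definition lap_gamma (R : realType) (N : nat) (L : 'M[R]_N) : R :=
  inf [set y : R | exists w : R,
         y = \big[Num.max/0]_(z <- lap_eigs_nz L) cabs (1 - w%:C%C * z)].

(* Main.v *)
Require Import Defs.
From HB Require Import structures.
From mathcomp Require Import all_boot all_order all_algebra.
From mathcomp Require Import complex.
From mathcomp Require Import boolp classical_sets reals.
From mathcomp Require Import ring lra zify.
Set Implicit Arguments. Unset Strict Implicit. Unset Printing Implicit Defensive.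
Import Order.TTheory GRing.Theory Num.Theory.
Local Open Scope ring_scope.



Lemma det_rank1 (F : idomainType) n (M : 'M[F]_n) (u : 'cV[F]_n) (v : 'rV[F]_n) :
  \det M != 0 -> \det (M + u *m v) = \det M + (v *m \adj M *m u) 0 0.
Proof.
move=> dn0.
set d := \det M; set w := v *m \adj M.
pose P := block_mx M (-u) v (1%:M : 'M[F]_1).
have h1 : P = block_mx 1%:M (-u) 0 1%:M *m block_mx (M + u *m v) 0 v 1%:M.
  rewrite mulmx_block !mul1mx !mul0mx ?mulmx0 !mulmx1 ?add0r ?addr0.
  by rewrite mulNmx addrK.
have dP : \det P = \det (M + u *m v).
  by rewrite h1 det_mulmx det_ublock det_lblock !det1 !mul1r mulr1.
have h2 : P *m block_mx (\adj M) (\adj M *m u) 0 (d%:M : 'M[F]_1)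
          = block_mx (d%:M) 0 w (w *m u + d%:M).
  rewrite mulmx_block !mulmx0 !addr0 mulmxA mul_mx_adj mul1mx.
  by rewrite mul_scalar_mx mul_mx_scalar scalerN addrN mulmxA.
have dA : \det M * \det (\adj M) = d ^+ n.
  by rewrite -det_mulmx mul_mx_adj det_scalar.
have := congr1 determinant h2.
rewrite det_mulmx det_ublock det_lblock det_scalar1 det_scalar !det_mx11.
rewrite dP => e.
have : \det (M + u *m v) * d ^+ n = d ^+ n * ((w *m u) 0 0 + d).
  have ee : (w *m u + d%:M) 0 0 = (w *m u) 0 0 + d.
    by rewrite [LHS]mxE [d%:M _ _]mxE eqxx mulr1n.
  rewrite -ee -e -dA /d; ring.
rewrite [d ^+ n * _]mulrC => /mulIf -> //.
  by rewrite addrC.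
by rewrite expf_neq0.
Qed.

Definition kK (F : fieldType) n (A : 'M[F]_n) (B : 'cV[F]_n) (K : 'rV[F]_n) : {poly F} :=
  (map_mx polyC K *m \adj (char_poly_mx A) *m map_mx polyC B) 0 0.



Lemma charpoly_rank1 (F : fieldType) n (A : 'M[F]_n) (u : 'cV[F]_n) (v : 'rV[F]_n) :
  char_poly (A - u *m v) = char_poly A +
   (map_mx polyC v *m \adj (char_poly_mx A) *m map_mx polyC u) 0 0.
Proof.
rewrite /char_poly.
have -> : char_poly_mx (A - u *m v) = char_poly_mx A + map_mx polyC u *m map_mx polyC v.
  by rewrite /char_poly_mx map_mxB map_mxM opprD opprK addrA.
rewrite det_rank1 //.
by have := char_poly_monic A; rewrite /char_poly => /monic_neq0.
Qed.

Section Cx.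
Variable R : rcfType.
Local Notation rc := (real_complex R).

Lemma cmxE m n (M : 'M[R]_(m, n)) : cmx M = map_mx rc M.
Proof. by []. Qed.


Lemma charR n (A : 'M[R]_n) B K : char_poly (A - B *m K) = char_poly A + kK A B K.
Proof. exact: charpoly_rank1. Qed.

Lemma charC n (A : 'M[R]_n) (B : 'cV[R]_n) (K : 'rV[R]_n) (s : R[i]) :
  char_poly (cmx A - s *: (cmx B *m cmx K)) =
  map_poly rc (char_poly A) + s%:P * map_poly rc (kK A B K).
Proof.
rewrite scalemxAl charpoly_rank1 /kK !cmxE -map_char_poly.
congr (_ + _).
have hC m p (X : 'M[R]_(m, p)) : map_mx polyC (map_mx rc X) = map_mx (map_poly rc) (map_mx polyC X).
  by apply/matrixP=> i j; rewrite !mxE map_polyC.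
have hZ m p (X : 'M[R[i]]_(m, p)) : map_mx polyC (s *: X) = s%:P *: map_mx polyC X.
  by apply/matrixP=> i j; rewrite !mxE polyCM.
rewrite hZ -scalemxAr [in LHS]mxE; congr (_ * _).
rewrite !hC -map_char_poly_mx -map_mx_adj -!map_mxM.
by rewrite mxE.
Qed.
End Cx.


Section Kry.
Variables (F : fieldType) (n' : nat).
Local Notation n := n'.+1.
Variables (A : 'M[F]_n) (B : 'cV[F]_n).

Definition hv (q : {poly F}) := horner_mx A q *m B.

Lemma hvD p q : hv (p + q) = hv p + hv q.
Proof. by rewrite /hv rmorphD mulmxDl. Qed.
Lemma hvZ c q : hv (c *: q) = c *: hv q.
Proof. by rewrite /hv horner_mxZ scalemxAl. Qed.
Lemma hv0 : hv 0 = 0.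
Proof. by rewrite /hv rmorph0 mul0mx. Qed.
Lemma hv_sum (I : Type) (s : seq I) (f : I -> {poly F}) :
  hv (\sum_(i <- s) f i) = \sum_(i <- s) hv (f i).
Proof.
elim: s => [|x s IH]; first by rewrite !big_nil hv0.
by rewrite !big_cons hvD IH.
Qed.

Lemma min_kill : exists p r, [/\ p \is monic, size p = r.+1, hv p = 0 &
   (forall q : {poly F}, (size q <= r)%N -> hv q = 0 -> q = 0)].
Proof.
pose P k := `[< exists q, [/\ q \is monic, size q = k.+1 & hv q = 0] >].
have Pn : P n.
  apply/asboolP; exists (char_poly A); split.
  - exact: char_poly_monic.
  - exact: size_char_poly.
  - by rewrite /hv Cayley_Hamilton mul0mx.
case: (ex_minnP (ex_intro P n Pn)) => r /asboolP [p [pm ps p0]] rmin.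
exists p, r; split => // q sq q0.
apply/eqP/negPn/negP => qn0.
have lq : lead_coef q != 0 by rewrite lead_coef_eq0.
pose q' := (lead_coef q)^-1 *: q.
have sq' : size q' = size q by rewrite size_scale // invr_eq0.
have : P (size q).-1.
  apply/asboolP; exists q'; split.
  - by rewrite monicE lead_coefZ mulVf.
  - by rewrite sq' prednK // size_poly_gt0.
  - by rewrite hvZ q0 scaler0.
move/rmin; rewrite -ltnS prednK ?size_poly_gt0 //.
by move=> h; move: (leq_trans h sq); rewrite ltnn.
Qed.


Section Fixed.
Variables (p : {poly F}) (r : nat).
Hypotheses (pm : p \is monic) (ps : size p = r.+1) (p0 : hv p = 0)
  (pmin : forall q : {poly F}, (size q <= r)%N -> hv q = 0 -> q = 0).

Definition hd j := hv (drop_poly j.+1 p).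

Lemma hd_ge j : (r <= j)%N -> hd j = 0.
Proof. by move=> h; rewrite /hd drop_poly_eq0 ?hv0 // ps. Qed.

Lemma drop_rec m : drop_poly m p = (p`_m)%:P + 'X * drop_poly m.+1 p.
Proof.
apply/polyP=> i; rewrite coefD coefXM coefC !coef_drop_poly.
by case: i => [|i] /=; rewrite ?add0n ?addr0 ?add0r // addSnnS.
Qed.

Lemma hd_rec m : hv (drop_poly m p) = p`_m *: B + A *m hd m.
Proof.
rewrite drop_rec hvD /hv /hd rmorphM /= horner_mx_C horner_mx_X mul_scalar_mx.
by rewrite mulmxA.
Qed.

Lemma plead : p`_r = 1.
Proof. by have := pm; rewrite monicE /lead_coef ps => /eqP. Qed.

Lemma phigh i : (r < i)%N -> p`_i = 0.
Proof. by move=> h; rewrite nth_default // ps. Qed.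

Lemma indep (v : 'rV[F]_r) :
  \sum_(j < r) v 0 j *: drop_poly j.+1 p = 0 -> v = 0.
Proof.
move=> h0.
have hc i : \sum_(j < r) v 0 j * p`_(i + j.+1) = 0.
  transitivity ((\sum_(j < r) v 0 j *: drop_poly j.+1 p)`_i); last by rewrite h0 coef0.
  by rewrite coef_sum; apply: eq_bigr => j _; rewrite coefZ coef_drop_poly.
suff H : forall k, (k < r)%N -> forall j : 'I_r, (j <= k)%N -> v 0 j = 0.
  apply/rowP => j; rewrite mxE; exact: (H j).
elim=> [|k IH] kr j jk.
  have := hc (r - 1)%N.
  rewrite (bigD1 j) //= big1 ?addr0.
    have -> : (r - 1 + j.+1 = r)%N by lia.
    by rewrite plead mulr1.
  move=> i /eqP ij; rewrite phigh ?mulr0 //.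
  have ij' : (i : nat) != (j : nat) by apply/eqP => h; apply: ij; exact: val_inj.
  lia.
have [jk'|jk'] := ltnP j k.+1; first by apply: IH; lia.
have jk1 : nat_of_ord j = k.+1 by lia.
have := hc (r - 1 - k.+1)%N.
rewrite (bigD1 j) //= big1 ?addr0.
  have -> : (r - 1 - k.+1 + j.+1 = r)%N by lia.
  by rewrite plead mulr1.
move=> i /eqP ij.
have ij' : (i : nat) != (j : nat) by apply/eqP => h; apply: ij; exact: val_inj.
have [il|il] := ltnP i j.
  rewrite (IH _ i) ?mul0r //; lia.
by rewrite phigh ?mulr0 //; lia.
Qed.

Definition Hm : 'M[F]_(r, n) := \matrix_(j < r, i < n) hd j i 0.

Lemma Hm_free : row_free Hm.
Proof.
apply: inj_row_free => v vH.
apply: indep; apply: pmin.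
  apply/leq_sizeP => i ri; rewrite coef_sum big1 // => j _.
  by rewrite coefZ coef_drop_poly phigh ?mulr0 //; lia.
rewrite hv_sum; apply/matrixP => i k; rewrite (ord1 k) summxE mxE.
rewrite -[RHS](_ : (v *m Hm) 0 i = 0); last by rewrite vH mxE.
rewrite mxE; apply: eq_bigr => j _; rewrite hvZ !mxE.
by [].
Qed.

Lemma surj (g : {poly F}) : (size g <= r)%N ->
  exists K : 'rV[F]_n, forall j, (K *m hd j) 0 0 = g`_j.
Proof.
move=> sg; have /row_freeP [X HX] := Hm_free.
pose gc : 'cV[F]_r := \col_j g`_j.
exists (X *m gc)^T => j.
have [jr|jr] := ltnP j r; last first.
  by rewrite hd_ge // mulmx0 mxE nth_default //; exact: leq_trans sg jr.
have e : (Hm *m (X *m gc)) (Ordinal jr) 0 = g`_j by rewrite mulmxA HX mul1mx mxE.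
rewrite -e !mxE; apply: eq_bigr => i _; rewrite !mxE mulrC.
by [].
Qed.

Definition Hc : 'cV[{poly F}]_n := \col_(i < n) \poly_(j < r) hd j i 0.

Lemma coefHc i m : (Hc i 0)`_m = hd m i 0.
Proof.
rewrite mxE coef_poly; case: ltnP => // h.
by rewrite hd_ge // mxE.
Qed.

Lemma coefHc' i m : (\poly_(j < r) hd j i 0)`_m = hd m i 0.
Proof. by have := coefHc i m; rewrite mxE. Qed.

Lemma Hc_eq : char_poly_mx A *m Hc = p *: map_mx polyC B.
Proof.
rewrite /char_poly_mx mulmxBl mul_scalar_mx.
apply/matrixP => i k; rewrite (ord1 k) !mxE.
apply/polyP => m.
rewrite coefB coefXM coefMC coef_sum.
rewrite coefHc'.
under eq_bigr do rewrite !mxE coefCM coefHc'.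
case: m => [|m] /=.
  have := hd_rec 0; rewrite drop_poly0l p0 => e.
  have := congr1 (fun M : 'cV[F]_n => M i 0) e; rewrite !mxE.
  move/eqP; rewrite eq_sym addr_eq0 => /eqP ->.
  by rewrite sub0r.
have := hd_rec m.+1; rewrite -/(hd m) => e.
rewrite e !mxE.
rewrite addrK mulrC //.
Qed.

End Fixed.


Lemma structural : exists (q a_uc : {poly F}) (r : nat),
  [/\ q \is monic, size q = r.+1, char_poly A = a_uc * q,
      (forall K, exists g : {poly F}, (size g <= r)%N /\ kK A B K = a_uc * g) &
      (forall g : {poly F}, (size g <= r)%N -> exists K, kK A B K = a_uc * g)].
Proof.
have [p [r [pm ps p0 pmin]]] := min_kill.
pose KH (K : 'rV[F]_n) := (map_mx polyC K *m Hc p r) 0 0.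
have hkey K : char_poly A * KH K = p * kK A B K.
  have e : char_poly A *: Hc p r = p *: (\adj (char_poly_mx A) *m map_mx polyC B).
    rewrite -mul_scalar_mx -mul_adj_mx -mulmxA Hc_eq //.
    by rewrite -scalemxAr.
  have := congr1 (fun M : 'cV[{poly F}]_n => (map_mx polyC K *m M) 0 0) e.
    have sc (a : {poly F}) (Y : 'M[{poly F}]_1) : (a *: Y) 0 0 = a * Y 0 0 by rewrite mxE.
    by rewrite -!scalemxAr /KH /kK -mulmxA !sc.
have coefKH K m : (KH K)`_m = (K *m hd p m) 0 0.
  rewrite /KH mxE coef_sum [RHS]mxE; apply: eq_bigr => k _.
  by rewrite !mxE coefCM coefHc' // /hd /hv mxE.
have sKH K : (size (KH K) <= r)%N.
  apply/leq_sizeP => j rj; rewrite coefKH (hd_ge ps) // ?mxE ?big1 // => k _.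
  by rewrite mxE mulr0.
have surjKH (g : {poly F}) : (size g <= r)%N -> exists K, KH K = g.
  move=> sg; have [K hK] := surj pm ps pmin sg.
  by exists K; apply/polyP => m; rewrite coefKH hK.
have pn0 : p != 0 by exact: monic_neq0.
have [a_uc ha] : exists a_uc, char_poly A = a_uc * p.
  have [r0|rpos] := eqVneq r 0%N.
    exists (char_poly A).
    have ps1 : size p = 1%N by rewrite ps r0.
    have -> : p = 1.
      rewrite (size1_polyC (eq_leq ps1)); congr (_%:P).
      by have := pm; rewrite monicE /lead_coef ps1 => /eqP.
    by rewrite mulr1.
  have [|K1 hK1] := surjKH 1; first by rewrite size_poly1 lt0n.
  exists (kK A B K1); have := hkey K1; rewrite hK1 mulr1 => ->.
  by rewrite mulrC.
have hk K : kK A B K = a_uc * KH K.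
  apply: (mulfI pn0); rewrite -hkey ha; ring.
exists p, a_uc, r; split => //.
  by move=> K; exists (KH K); split.
move=> g sg; have [K hK] := surjKH g sg.
by exists K; rewrite hk hK.
Qed.

End Kry.

Open Scope complex_scope.



Section Cplx.
Variable R : rcfType.

Lemma cabsE (a b : R) : cabs (a +i* b) = Num.sqrt (a ^+ 2 + b ^+ 2).
Proof. by []. Qed.

Lemma cabs_ge0 (z : R[i]) : 0 <= cabs z.
Proof. by case: z => a b; rewrite cabsE sqrtr_ge0. Qed.

Lemma cabs2 (a b : R) : cabs (a +i* b) ^+ 2 = a ^+ 2 + b ^+ 2.
Proof. by rewrite cabsE sqr_sqrtr // addr_ge0 // sqr_ge0. Qed.

Lemma test (x y p q : R) : (x +i* y) - (p +i* q) = (x - p) +i* (y - q).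
Proof. by simpc. Qed.

Lemma test2 (x y p q : R) : (x +i* y) * (p +i* q) = (x * p - y * q) +i* (x * q + y * p).
Proof. by simpc. Qed.

Lemma KL (u z : R[i]) (rho : R) : 1 <= cabs u -> 1 <= cabs z -> 0 < rho -> rho <= 1 ->
  rho * cabs (z - u) <= cabs u * cabs (z - (rho / cabs u ^+ 2)%:C * u).
Proof.
case: u => p q; case: z => x y.
set a := cabs (p +i* q); set b := cabs (x +i* y).
move=> a1 b1 r0 r1.
have a2 : a ^+ 2 = p ^+ 2 + q ^+ 2 by rewrite /a cabs2.
have b2 : b ^+ 2 = x ^+ 2 + y ^+ 2 by rewrite /b cabs2.
have an0 : a ^+ 2 != 0 by rewrite expf_neq0 // gt_eqF // (lt_le_trans ltr01 a1).
set k := rho / a ^+ 2.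
have e1 : (x +i* y) - (p +i* q) = (x - p) +i* (y - q) by simpc.
have e2 : (x +i* y) - k%:C * (p +i* q) = (x - k * p) +i* (y - k * q) by simpc.
rewrite e1 e2.
have h0 : 0 <= rho * cabs ((x - p) +i* (y - q)) by rewrite mulr_ge0 ?cabs_ge0 // ltW.
have h0' : 0 <= a * cabs ((x - k * p) +i* (y - k * q)) by rewrite mulr_ge0 ?cabs_ge0 // /a cabs_ge0.
rewrite -(ler_pXn2r (isT : (0 < 2)%N)) ?nnegrE // !exprMn !cabs2.
set S := p * x + q * y.
have eR : (p ^+ 2 + q ^+ 2) * ((x - k * p) ^+ 2 + (y - k * q) ^+ 2) =
   a ^+ 2 * b ^+ 2 - 2 * rho * S + rho ^+ 2.
  rewrite -a2; transitivity (a ^+ 2 * b ^+ 2 - 2 * rho * S + rho ^+ 2 / a ^+ 2 * (p ^+ 2 + q ^+ 2)).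
    rewrite b2 /k /S; field; by rewrite gt_eqF // (lt_le_trans ltr01 a1).
  by rewrite -a2 (divfK an0).
have eL : rho ^+ 2 * ((x - p) ^+ 2 + (y - q) ^+ 2) = rho ^+ 2 * (b ^+ 2 - 2 * S + a ^+ 2).
  by rewrite a2 b2 /S; ring.
rewrite eR eL.
have CS : S ^+ 2 <= (a * b) ^+ 2.
  rewrite exprMn a2 b2 /S -subr_ge0.
  have -> : (p ^+ 2 + q ^+ 2) * (x ^+ 2 + y ^+ 2) - (p * x + q * y) ^+ 2 = (p * y - q * x) ^+ 2 by ring.
  exact: sqr_ge0.
have ab0 : 0 <= a * b by apply: mulr_ge0; apply: le_trans a1 || apply: le_trans b1; rewrite ler01.
have Sab : S <= a * b by nra.
have h1 : 0 <= (b * (a - rho) + rho * (a - 1)) * (a * (b - rho) + rho * (b - 1)).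
  by apply: mulr_ge0; nra.
have h2 : 0 <= rho * (1 - rho) * (a * b - S).
  by apply: mulr_ge0; [apply: mulr_ge0|]; lra.
nra.
Qed.

Lemma apol (s : R[i]) (M' : R) : 1 < M' -> M' * cabs (1 - s) < 1 ->
  M' * cabs ((M' ^+ 2 / (M' ^+ 2 - 1))%:C * s - 1) < cabs ((M' ^+ 2 / (M' ^+ 2 - 1))%:C * s).
Proof.
case: s => x y; set c := M' ^+ 2 / (M' ^+ 2 - 1) => M1 h.
have e1 : 1 - (x +i* y) = (1 - x) +i* (- y) by simpc.
have e2 : c%:C * (x +i* y) - 1 = (c * x - 1) +i* (c * y) by simpc.
have e3 : c%:C * (x +i* y) = (c * x) +i* (c * y) by simpc.
rewrite e1 in h; rewrite e2 e3.
have M0 : 0 < M' by lra.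
have dn0 : M' ^+ 2 - 1 != 0 by rewrite subr_eq0 gt_eqF // expr_gt1 // ltW.
have c0 : 0 < c by rewrite /c divr_gt0 ?exprn_gt0 // subr_gt0 expr_gt1 // ltW.
have h0 : 0 <= M' * cabs ((1 - x) +i* (- y)) by rewrite mulr_ge0 ?cabs_ge0 // ltW.
have h2 : (M' * cabs ((1 - x) +i* (- y))) ^+ 2 < 1.
  by rewrite expr_lt1 //.
rewrite exprMn cabs2 in h2.
have g0 : 0 <= M' * cabs ((c * x - 1) +i* (c * y)) by rewrite mulr_ge0 ?cabs_ge0 // ltW.
rewrite -(ltr_pXn2r (isT : (0 < 2)%N)) ?nnegrE ?cabs_ge0 // exprMn !cabs2.
have id : (c * x) ^+ 2 + (c * y) ^+ 2 - M' ^+ 2 * ((c * x - 1) ^+ 2 + (c * y) ^+ 2)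
   = c * (1 - M' ^+ 2 * ((1 - x) ^+ 2 + (- y) ^+ 2)).
  rewrite /c; field; exact: dn0.
rewrite -subr_gt0 id mulr_gt0 // subr_gt0 //.
Qed.

Lemma cabsM (a b : R[i]) : cabs (a * b) = cabs a * cabs b.
Proof. exact: Normc.normcM. Qed.

Lemma cabs_prod (I : Type) (s : seq I) (f : I -> R[i]) :
  cabs (\prod_(i <- s) f i) = \prod_(i <- s) cabs (f i).
Proof.
elim: s => [|x s IH]; first by rewrite !big_nil /cabs Normc.normc1.
by rewrite !big_cons cabsM IH.
Qed.

Lemma cabs_conj (z : R[i]) : cabs z^* = cabs z.
Proof. by case: z => a b; rewrite /conjc !cabsE sqrrN. Qed.

End Cplx.


Section Roots.
Variable F : closedFieldType.

Definition rts (P : {poly F}) := sval (closed_field_poly_normal P).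

Lemma rtsE P : P \is monic -> P = \prod_(z <- rts P) ('X - z%:P).
Proof.
move=> Pm; transitivity (lead_coef P *: \prod_(z <- rts P) ('X - z%:P)).
  exact: (svalP (closed_field_poly_normal P)).
by rewrite (monicP Pm) scale1r.
Qed.

Lemma root_rts P z : P \is monic -> root P z = (z \in rts P).
Proof. by move=> Pm; rewrite {1}(rtsE Pm) root_prod_XsubC. Qed.

Lemma prod_uniq (s t : seq F) :
  \prod_(z <- s) ('X - z%:P) = \prod_(z <- t) ('X - z%:P) -> perm_eq s t.
Proof.
elim: s t => [|x s IH] t.
  rewrite big_nil => h.
  have := congr1 (fun q : {poly F} => size q) h; rewrite /= size_poly1 size_prod_XsubC.
  by case: t {h} => //.
rewrite big_cons => h.
have xt : x \in t.
  by rewrite -root_prod_XsubC -h rootM root_XsubC eqxx.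
have pt := perm_to_rem xt.
rewrite (perm_big _ pt) big_cons /= in h.
have xn0 : ('X - x%:P) != 0 by rewrite polyXsubC_eq0.
have := mulfI xn0 h.
move/IH => hs.
have h2 : perm_eq (x :: s) (x :: rem x t) by rewrite perm_cons.
by apply: (perm_trans h2); rewrite perm_sym.
Qed.

End Roots.

Lemma eigsE (R : rcfType) n (M : 'M[R[i]]_n) : eigs M = rts (char_poly M).
Proof. by []. Qed.


Section H.
Variable R : rcfType.
Local Notation rc := (real_complex R).

Lemma prod_ge1 (s : seq R[i]) :
  1 <= \prod_(z <- s | 1 <= cabs z) cabs z.
Proof. by apply: (big_ind (fun x => 1 <= x)) => // x y; exact: mulr_ege1. Qed.

Lemma cabsC (c : R) : cabs c%:C = `|c|.
Proof. by change (cabs (c +i* 0) = `|c|); rewrite cabsE expr0n addr0 sqrtr_sqr. Qed.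

Lemma cabsN (z : R[i]) : cabs (- z) = cabs z.
Proof. exact: normcN. Qed.

Lemma cabs_eq0 (z : R[i]) : (cabs z == 0) = (z == 0).
Proof.
apply/eqP/eqP => [/Normc.eq0_normc //|->]; exact: Normc.normc0.
Qed.

Lemma prod_count (s : seq R[i]) (P : pred R[i]) (f : R[i] -> R) (rho : R) : rho != 0 ->
  (\prod_(z <- s) (if P z then f z / rho else 1)) * rho ^+ (count P s) =
  \prod_(z <- s | P z) f z.
Proof.
move=> r0; elim: s => [|x s IH]; first by rewrite !big_nil mulr1.
rewrite !big_cons /=; case: (P x) => /=; last by rewrite mul1r.
by rewrite exprS -IH; field.
Qed.

Lemma bernoulli (x : R) m : 0 <= x -> x <= 1 -> 1 - m%:R * x <= (1 - x) ^+ m.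
Proof.
move=> x0 x1; elim: m => [|m IH]; first by rewrite mul0r subr0 expr0.
rewrite exprSr -natr1.
have h : 0 <= 1 - x by lra.
have := ler_wpM2r h IH.
have m0 : 0 <= m%:R :> R by exact: ler0n.
nra.
Qed.

Lemma bigmax_ge (s : seq R[i]) (f : R[i] -> R) z : z \in s ->
  f z <= \big[Num.max/0]_(w <- s) f w.
Proof.
elim: s => [|x s IH] //; rewrite in_cons big_cons => /orP [/eqP ->|zs].
  by rewrite le_max lexx.
by rewrite le_max IH ?orbT.
Qed.

Lemma bigmax_ge0 (s : seq R[i]) (f : R[i] -> R) : 0 <= \big[Num.max/0]_(w <- s) f w.
Proof.
elim: s => [|x s IH]; first by rewrite big_nil.
by rewrite big_cons le_max IH orbT.
Qed.

Lemma cmxZ m n (c : R) (K : 'M[R]_(m, n)) : cmx (c *: K) = c%:C *: cmx K.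
Proof. by apply/matrixP => i j; rewrite !mxE rmorphM. Qed.


Lemma real_of_conj (c : R[i]) : @conjc R c = c -> real_complex R (complex.Re c) = c.
Proof.
case: c => a b /= [] h.
have -> : b = 0 by lra.
by [].
Qed.

Lemma phi_small (u : R[i]) (rho : R) : 0 < rho -> rho < 1 -> 1 <= cabs u ->
  cabs ((rho / cabs u ^+ 2)%:C * u) < 1.
Proof.
move=> r0 r1 h.
have a0 : 0 < cabs u by exact: lt_le_trans ltr01 h.
rewrite cabsM cabsC ger0_norm; last by rewrite divr_ge0 ?exprn_ge0 // ?ltW.
set t := rho / cabs u ^+ 2.
have te : t * cabs u ^+ 2 = rho by rewrite /t divfK // expf_neq0 // lt0r_neq0.
have t0 : 0 <= t by rewrite /t divr_ge0 ?exprn_ge0 // ltW.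
move: te t0 h a0 r1; clear; move: (cabs u) => a te t0 h a0 r1.
nra.
Qed.

Lemma rho_choice (M2 M' : R) (m : nat) : 1 <= M2 -> M2 < M' ->
  exists rho : R, [/\ 0 < rho, rho < 1 & M2 <= M' * rho ^+ m].
Proof.
move=> M21 hM.
have M'0 : 0 < M' by lra.
pose q := M2 / M'.
have q0 : 0 < q by rewrite divr_gt0 //; lra.
have q1 : q < 1 by rewrite ltr_pdivrMr // mul1r.
have mm0 : 0 <= m%:R :> R by exact: ler0n.
pose x := (1 - q) / (m.+1)%:R.
have xe : x * (m%:R + 1) = 1 - q by rewrite /x natr1 divfK // pnatr_eq0.
have x0 : 0 < x by rewrite /x divr_gt0 // ?ltr0Sn //; lra.
have x1 : x < 1 by nra.
exists (1 - x); split; [lra|lra|].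
have rm : q <= (1 - x) ^+ m.
  apply: le_trans (bernoulli m (ltW x0) (ltW x1)); nra.
have -> : M2 = q * M' by rewrite /q divfK // gt_eqF.
by rewrite mulrC ler_wpM2l // ltW.
Qed.

Lemma bound (s2 : seq R[i]) (rho : R) (z : R[i]) : 0 < rho -> rho <= 1 -> 1 <= cabs z ->
  cabs (\prod_(u <- s2) (z - u)) <=
  (\prod_(u <- s2) (if 1 <= cabs u then cabs u / rho else 1)) *
  cabs (\prod_(u <- s2) (z - (if 1 <= cabs u then (rho / cabs u ^+ 2)%:C * u else u))).
Proof.
move=> r0 r1 hz; rewrite !cabs_prod -big_split /=.
apply: ler_prod => u _; apply/andP; split; first exact: cabs_ge0.
case: ifP => h; last by rewrite mul1r.
have := KL h hz r0 r1.
have e C : rho * (cabs u / rho * C) = cabs u * C by field; rewrite lt0r_neq0.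
by rewrite -(ler_pM2l r0) e.
Qed.

Lemma real_contra (x y t q Mr M' : R) : x * q = t * y -> 0 < y -> 0 <= q ->
  x <= Mr * y -> Mr <= M' -> M' * q < t -> False.
Proof.
move=> e y0 q0 h1 h2 h3.
have a1 : 0 <= (Mr * y - x) * q by apply: mulr_ge0 => //; lra.
have a2 : 0 <= (M' - Mr) * (y * q) by apply: mulr_ge0; [lra| exact: mulr_ge0 (ltW y0) q0].
have a3 : 0 < (t - M' * q) * y by apply: mulr_gt0 => //; lra.
nra.
Qed.

Lemma final_contra (X Y tau : R[i]) (Mr M' : R) : X + tau * (Y - X) = 0 -> Y != 0 ->
  cabs X <= Mr * cabs Y -> Mr <= M' -> M' * cabs (tau - 1) < cabs tau -> False.
Proof.
move=> e Y0 h1 h2 h3.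
have e2 : X * (tau - 1) = tau * Y.
  apply/eqP; rewrite -subr_eq0; apply/eqP.
  by rewrite -[RHS]oppr0 -e; ring.
have e3 : cabs X * cabs (tau - 1) = cabs tau * cabs Y by rewrite -!cabsM e2.
have y0 : 0 < cabs Y by rewrite lt_neqAle eq_sym cabs_eq0 Y0 cabs_ge0.
exact: (real_contra e3 y0 (cabs_ge0 _) h1 h2 h3).
Qed.

Lemma disk n' (A : 'M[R]_n'.+1) (B : 'cV[R]_n'.+1) (M' : R) :
  stabilizable A B ->
  \prod_(z <- eigs (cmx A) | 1 <= cabs z) cabs z < M' ->
  exists K : 'rV[R]_n'.+1, forall s : R[i], M' * cabs (1 - s) < 1 ->
    schur_stable (cmx A - s *: (cmx B *m cmx K)).
Proof.
move=> [K0 stK0] hM.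
have [p [a_uc [r [pm ps ha hall hsurj]]]] := structural A B.
pose pc := map_poly rc p; pose uc := map_poly rc a_uc.
have pcm : pc \is monic by rewrite map_monic.
have ucm0 : a_uc \is monic by rewrite -(monicMr _ pm) -ha char_poly_monic.
have ucm : uc \is monic by rewrite map_monic.
have ucst : forall z, root uc z -> cabs z < 1.
  move=> z hz; have [g0 [_ hg0]] := hall K0.
  apply: stK0; rewrite eigsE -root_rts ?char_poly_monic //.
  rewrite cmxE -map_char_poly charR hg0 ha -mulrDr rmorphM /= rootM.
  by rewrite hz.
set s1 := rts uc; set s2 := rts pc.
have hperm : perm_eq (eigs (cmx A)) (s1 ++ s2).
  apply: prod_uniq; rewrite big_cat /= -(rtsE ucm) -(rtsE pcm).
  rewrite eigsE -rtsE ?char_poly_monic //.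
  by rewrite cmxE -map_char_poly ha rmorphM.
have s1st : forall z, z \in s1 -> cabs z < 1.
  by move=> z; rewrite -root_rts //; exact: ucst.
set M2 := \prod_(z <- s2 | 1 <= cabs z) cabs z.
have hM2 : \prod_(z <- eigs (cmx A) | 1 <= cabs z) cabs z = M2.
  rewrite (perm_big _ hperm) big_cat /= big1_seq ?mul1r // => z /andP [h1 h2].
  by have := s1st z h2; rewrite ltNge h1.
rewrite hM2 in hM.
have M21 : 1 <= M2 by apply: prod_ge1.
have M'1 : 1 < M' by exact: le_lt_trans M21 hM.
set m := count (fun z => 1 <= cabs z) s2.
have [rho [r0 r1 rm]] := rho_choice m M21 hM.
pose g u := if 1 <= cabs u then cabs u / rho else 1.
set Mr := \prod_(u <- s2) g u.
have Mr1 : Mr <= M'.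
  have e := prod_count s2 (fun z => 1 <= cabs z) (@cabs R) (lt0r_neq0 r0).
  have rp : 0 < rho ^+ m by exact: exprn_gt0.
  rewrite -(ler_pM2r rp).
  by rewrite /Mr /g e -/M2.
pose phi u := if 1 <= cabs u then (rho / cabs u ^+ 2)%:C * u else u.
have phist u : cabs (phi u) < 1.
  rewrite /phi; case: ifP => h; last by rewrite ltNge h.
  exact: phi_small.
pose dC := \prod_(u <- s2) ('X - (phi u)%:P).
have dCst z : root dC z -> cabs z < 1.
  rewrite /dC -(big_map phi predT (fun w => 'X - w%:P)) root_prod_XsubC.
  by move=> /mapP [u _ ->].
have dCm : dC \is monic by exact: monic_prod_XsubC.
have phic u : @conjc R (phi u) = phi (@conjc R u).
  rewrite /phi cabs_conj; case: ifP => // _.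
  by rewrite rmorphM /= oppr0.
have pconj : perm_eq (map (@conjc R) s2) s2.
  apply: prod_uniq; rewrite -(rtsE pcm) big_map.
  rewrite -(map_prod_XsubC (@conjc R)) -(rtsE pcm).
  rewrite /pc -map_poly_comp; apply: eq_map_poly => y /=.
  by rewrite oppr0.
have dreal : map_poly (@conjc R) dC = dC.
  rewrite /dC map_prod_XsubC.
  transitivity (\prod_(u <- s2) ('X - (phi (@conjc R u))%:P)).
    by apply: eq_bigr => u _; rewrite -phic.
  by rewrite -(big_map (@conjc R) predT (fun w => 'X - (phi w)%:P)) (perm_big _ pconj).
pose dR := \poly_(i < size dC) complex.Re dC`_i.
have hdR : map_poly rc dR = dC.
  apply/polyP => i; rewrite coef_map /= coef_poly.
  case: ltnP => hi; last by rewrite nth_default.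
  apply: real_of_conj.
  by have := congr1 (fun P : {poly R[i]} => P`_i) dreal; rewrite /= coef_map.
have sdC : size dC = r.+1.
  rewrite /dC size_prod_XsubC.
  have := congr1 (fun P : {poly R[i]} => size P) (rtsE pcm).
  by rewrite /= size_prod_XsubC size_map_poly ps => ->.
have sdR : size dR = r.+1 by rewrite -(size_map_poly rc) hdR.
have dRm : dR \is monic by rewrite -(map_monic rc) hdR.
have lead1 (P : {poly R}) : P \is monic -> size P = r.+1 -> P`_r = 1.
  by move=> Pm sP; have := Pm; rewrite monicE /lead_coef sP => /eqP.
set c := M' ^+ 2 / (M' ^+ 2 - 1).
pose gR := c *: (dR - p).
have sgR : (size gR <= r)%N.
  apply: leq_trans (size_scale_leq _ _) _.
  apply/leq_sizeP => j rj; rewrite coefB.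
  have [->|jr] := eqVneq j r; first by rewrite !lead1 ?subrr.
  have rj' : (r < j)%N by rewrite ltn_neqAle eq_sym jr rj.
  by rewrite !nth_default ?subrr ?sdR ?ps.
have [K hK] := hsurj gR sgR.
exists K => s hs z.
rewrite eigsE -root_rts ?char_poly_monic // charC hK ha !rmorphM /=.
rewrite /gR map_polyZ rmorphB /= hdR -/pc -/uc.
have pe : uc * pc + s%:P * (uc * (c%:C *: (dC - pc))) =
          uc * (pc + (c%:C * s)%:P * (dC - pc)).
  by rewrite -mul_polyC polyCM; ring.
rewrite pe rootM => /orP [/ucst //|hr].
rewrite ltNge; apply/negP => z1.
have hX : pc.[z] = \prod_(u <- s2) (z - u).
  rewrite {1}(rtsE pcm) horner_prod; apply: eq_bigr => u _; exact: hornerXsubC.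
have hY : dC.[z] = \prod_(u <- s2) (z - phi u).
  rewrite /dC horner_prod; apply: eq_bigr => u _; exact: hornerXsubC.
have Y0 : dC.[z] != 0.
  apply/negP => /eqP h0; have := dCst z (introT eqP h0).
  by rewrite ltNge z1.
have hb := bound s2 r0 (ltW r1) z1.
rewrite -hX -/g -/Mr in hb.
have e : pc.[z] + (c%:C * s) * (dC.[z] - pc.[z]) = 0.
  by move: hr; rewrite /root !hornerE => /eqP.
apply: (final_contra e Y0 _ Mr1 (apol M'1 hs)).
by rewrite hY.
Qed.
End H.


Lemma choose_M' (R : realFieldType) (M y : R) : 1 <= M -> 0 <= y -> y * M < 1 ->
  exists M', M < M' /\ y * M' < 1.
Proof.
move=> M1 y0 h.
have d0 : 0 < 2 * (y + 1) by lra.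
exists (M + (1 - y * M) / (2 * (y + 1))); split.
  by rewrite ltrDl divr_gt0 //; lra.
set t := (1 - y * M) / (2 * (y + 1)).
have te : t * (2 * (y + 1)) = 1 - y * M by rewrite /t divfK // gt_eqF.
have t0 : 0 < t by rewrite /t divr_gt0 //; lra.
nra.
Qed.

Close Scope complex_scope.
Local Open Scope classical_set_scope.

Theorem theorem2 (R : realType) (n N : nat)
    (A : 'M[R]_n) (B : 'M[R]_(n, 1)) (Ad : 'M[R]_N) :
  (forall i : 'I_N, Ad i i = 0) ->
  (forall i j : 'I_N, 0 <= Ad i j) ->
  stabilizable A B ->
  unstable_prod A * lap_gamma (laplacian Ad) < 1 ->
  exists K : 'M[R]_(1, n),
    forall lam : R[i], lam \in lap_eigs_nz (laplacian Ad) ->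
      schur_stable (cmx A - lam *: (cmx B *m cmx K)).
Proof.
move=> _ _ stab hgam.
case: n A B stab hgam => [|n'] A B stab hgam.
  exists 0 => lam _ z; rewrite eigsE -root_rts ?char_poly_monic //.
  by rewrite /char_poly det_mx00 rootC oner_eq0.
have cmx0 : cmx (0 : 'M[R]_(1, n'.+1)) = 0 by apply/matrixP => i j; rewrite !mxE.
case hh: (has (fun z => 1 <= cabs z) (eigs (cmx A))); last first.
  exists 0 => lam _ z; rewrite cmx0 mulmx0 scaler0 subr0 => hz.
  move/hasPn : hh => /(_ z hz) /negP h.
  by rewrite ltNge; apply/negP.
move: hgam; rewrite /unstable_prod /= hh.
have M1 := prod_ge1 (eigs (cmx A)).
set M := bigop.body _ _ _ in M1 *.
set S := [set y : R | exists w : R, y = \big[Num.max/0]_(z <- lap_eigs_nz (laplacian Ad)) cabs (1 - w%:C%C * z)]%classic.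
move=> hgam.
have M0 : 0 < M by lra.
have hg : lap_gamma (laplacian Ad) < M^-1.
  by rewrite -(ltr_pM2l M0) mulfV ?gt_eqF.
have S0 : S !=set0.
  by exists (\big[Num.max/0]_(z <- lap_eigs_nz (laplacian Ad)) cabs (1 - 0%:C%C * z)), 0.
have [y [w ->] hy] := inf_lt S0 hg.
set y0 := \big[Num.max/0]_(_ <- _) _ in hy *.
have y00 : 0 <= y0 by exact: bigmax_ge0.
have hyM : y0 * M < 1 by rewrite -(mulVf (lt0r_neq0 M0)) ltr_pM2r.
have [M' [hMM' hyM']] := choose_M' M1 y00 hyM.
have [K hK] := disk stab hMM'.
exists (w *: K) => lam hl.
rewrite cmxZ -scalemxAr scalerA; apply: hK.
have h1 : cabs (1 - lam * w%:C%C) <= y0.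
  rewrite mulrC; exact: (bigmax_ge (fun z => cabs (1 - w%:C%C * z)) hl).
have M'0 : 0 < M' by lra.
apply: le_lt_trans (ler_wpM2l (ltW M'0) h1) _.
by rewrite mulrC.
Qed.
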